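(* Let $(P,\leq_1,\leq_2)$ be a finite weak plane poset. Then the relation $\ll$ on $P$ defined by $$x\ll y \iff (y\leq_1 x \text{ or } x\leq_2 y)$$ is a total order on $P$.
   Context: A double poset is a finite set $P$ equipped with two partial orders $\leq_1$ and $\leq_2$. A weak plane poset is a finite double poset $(P,\leq_1,\leq_2)$ such that: (1) for all $x,y\in P$, if $x\leq_1 y$ and $x\leq_2 y$ then $x=y$; (2) the relation $\preceq$ defined on $P$ by $x\preceq y \iff (x\leq_1 y \text{ or } x\leq_2 y)$ is a total quasi-order (i.e. reflexive, transitive, and any two elements are comparable; it need not be antisymmetric). *)

(* Defs.v *)
From mathcomp Require Import all_boot.
Set Implicit Arguments. Unset Strict Implicit. Unset Printing Implicit Defensive.

Definition partial_order (T : Type) (r : rel T) : Prop :=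
  reflexive r /\ antisymmetric r /\ transitive r.

Definition total_order (T : Type) (r : rel T) : Prop :=
  partial_order r /\ total r.

Definition total_quasi_order (T : Type) (r : rel T) : Prop :=
  reflexive r /\ transitive r /\ total r.

Definition double_poset (P : finType) (le1 le2 : rel P) : Prop :=
  partial_order le1 /\ partial_order le2.

Definition weak_plane_poset (P : finType) (le1 le2 : rel P) : Prop :=
  [/\ double_poset le1 le2,
      (forall x y : P, le1 x y -> le2 x y -> x = y)
    & total_quasi_order (fun x y => le1 x y || le2 x y)].

Definition ll (P : finType) (le1 le2 : rel P) : rel P :=
  fun x y => le1 y x || le2 x y.

(* Main.v *)
Require Import Defs.
From mathcomp Require Import all_boot.

Theorem mainTheorem1 (P : finType) (le1 le2 : rel P) :
  weak_plane_poset le1 le2 -> total_order (ll le1 le2).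
Proof.
case=> [[[r1 [a1 t1]] [r2 [a2 t2]]] H [_ [_ tQ]]].
rewrite /total_order /partial_order /ll.
split; [split; [|split]|].
- by move=> x; rewrite r2 orbT.
- move=> x y /andP [/orP [h1|h1] /orP [h2|h2]].
  + by apply: a1; rewrite h1 h2.
  + by symmetry; apply: H.
  + by apply: H.
  + by apply: a2; rewrite h1 h2.
- move=> y x z /orP [h1|h1] /orP [h2|h2].
  + by rewrite (t1 _ _ _ h2 h1).
  + have := tQ x z; rewrite /= => /orP [/orP [q|q] | /orP [q|q]].
    * have e : y = z by apply: H=> //; exact: t1 h1 q.
      by subst; rewrite h1.
    * by rewrite q orbT.
    * by rewrite q.
    * have e : y = x by apply: H=> //; exact: t2 h2 q.
      by subst; rewrite h2 orbT.
  + have := tQ x z; rewrite /= => /orP [/orP [q|q] | /orP [q|q]].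
    * have e : x = y by apply: H=> //; exact: t1 q h2.
      by subst; rewrite h2.
    * by rewrite q orbT.
    * by rewrite q.
    * have e : z = y by apply: H=> //; exact: t2 q h1.
      by subst; rewrite h1 orbT.
  + by rewrite (t2 _ _ _ h1 h2) orbT.
- move=> x y; have := tQ x y; rewrite /= => /orP [/orP [q|q] | /orP [q|q]].
  + by rewrite /= q !orbT.
  + by rewrite /= q !orbT.
  + by rewrite /= q.
  + by rewrite /= q !orbT.
Qed.
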